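(* In the setting described in the context, suppose $m>p\ge2$, $0\le w_l<1$ for each $l=1,\ldots,m$, and $f(\mathbf{w})>0$. Fix $i\in\{1,\ldots,m\}$ and let $a,b,A,B$ be as defined in the context. Then the solution of $\max_{0\le x\le1}h_i(x)$ belongs to one of the following four cases: (1) If $A\ne B$, $A>0$, $B>0$, $a>b$, $aB>bA$, and $bA<(a-b)B$, then \[ \max_{0\le x\le1}h_i(x)=\left(\frac{\sqrt{A(a-b)}-\sqrt{aB-bA}}{A-B}\right)^2, \] attained uniquely at $x_*=\frac{t_*-B}{A-B}\in(0,1)$, where $t_*=\sqrt{\frac{A(aB-bA)}{a-b}}\in(\min\{A,B\},\max\{A,B\})$; (2) If $A=B$ and $a>2b$, then $\max_{0\le x\le1}h_i(x)=\frac{a^2}{4(a-b)B}>0$, attained uniquely at $x_*=\frac{a-2b}{2a-2b}\in(0,1)$; (3) If $A\ne B$, $B=0$, and $b=0$, then $\max_{0\le x\le1}h_i(x)=\frac{a}{A}>0$, attained uniquely at $x_*=0$; (4) For all other cases, $\max_{0\le x\le1}h_i(x)=\frac{b}{B}>0$, attained at the unique $x_*=0$.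
   Context: Given a model matrix $\mathbf{X}\in\mathbb{R}^{m\times p}$ (rows $\mathbf{q}(\mathbf{x}_i)^T$ for distinct design points under a generalized linear model) and numbers $\nu_1,\ldots,\nu_m\ge0$ (where $\nu_i=(\partial\mu_i/\partial\eta_i)^2/\mathrm{Var}(Y_i)$), for $\mathbf{w}=(w_1,\ldots,w_m)^T$ with $w_l\ge0$, $\sum_lw_l=1$, let $\mathbf{W}=\mathrm{diag}\{w_1\nu_1,\ldots,w_m\nu_m\}$, $f(\mathbf{w})=|\mathbf{X}^T\mathbf{W}\mathbf{X}|$, $f_{-j}(\mathbf{w})=|\mathbf{X}_{-j}^T\mathbf{W}\mathbf{X}_{-j}|$ for $j=1,\ldots,p$ (with $\mathbf{X}_{-j}$ being $\mathbf{X}$ with its $j$th column removed), and $h(\mathbf{w})=[\mathrm{tr}((\mathbf{X}^T\mathbf{W}\mathbf{X})^{-1})]^{-1}$ if $f(\mathbf{w})>0$, $h(\mathbf{w})=0$ otherwise. For $i$ with $0\le w_i<1$ and $x\in[0,1]$, let $\mathbf{w}^{(i)}(x)=\big(\tfrac{1-x}{1-w_i}w_1,\ldots,\tfrac{1-x}{1-w_i}w_{i-1},x,\tfrac{1-x}{1-w_i}w_{i+1},\ldots,\tfrac{1-x}{1-w_i}w_m\big)^T$, $f_i(x)=f(\mathbf{w}^{(i)}(x))$, $f_i^{(-j)}(x)=f_{-j}(\mathbf{w}^{(i)}(x))$, and $h_i(x)=h(\mathbf{w}^{(i)}(x))$. Define constants: if $0<w_i<1$, $b=f_i(0)$, $a=[f(\mathbf{w})-b(1-w_i)^p]/[w_i(1-w_i)^{p-1}]$,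 $b_j=f_i^{(-j)}(0)$, $a_j=[f_{-j}(\mathbf{w})-b_j(1-w_i)^{p-1}]/[w_i(1-w_i)^{p-2}]$; if $w_i=0$, $b=f(\mathbf{w})$, $a=2^pf_i(1/2)-b$, $b_j=f_{-j}(\mathbf{w})$, $a_j=2^{p-1}f_i^{(-j)}(1/2)-b_j$. (Then $f_i(x)=ax(1-x)^{p-1}+b(1-x)^p$ and $f_i^{(-j)}(x)=a_jx(1-x)^{p-2}+b_j(1-x)^{p-1}$ with all these constants nonnegative.) Finally let $A=\sum_{j=1}^pa_j$ and $B=\sum_{j=1}^pb_j$. *)

(* Defs.v *)
From HB Require Import structures.
From mathcomp Require Import all_boot all_order all_algebra.
Set Implicit Arguments. Unset Strict Implicit. Unset Printing Implicit Defensive.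
Import Order.TTheory GRing.Theory Num.Theory.
Local Open Scope ring_scope.

Section Defs.
Variable R : rcfType.

Definition Wmx (m : nat) (nu w : 'I_m -> R) : 'M[R]_m :=
  diag_mx (\row_l (w l * nu l)).

Definition infoM (m n : nat) (X : 'M[R]_(m, n)) (nu w : 'I_m -> R) : 'M[R]_n :=
  X^T *m Wmx nu w *m X.

Definition fdet (m n : nat) (X : 'M[R]_(m, n)) (nu w : 'I_m -> R) : R :=
  \det (infoM X nu w).

(* index k of 'I_n.-1 mapped to the k-th index of 'I_n different from j *)
Definition skip_ord (n : nat) (j : 'I_n) (k : 'I_n.-1) : 'I_n :=
  insubd j (bump j k).

Definition colrem (m n : nat) (X : 'M[R]_(m, n)) (j : 'I_n) : 'M[R]_(m, n.-1) :=
  colsub (skip_ord j) X.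

Definition fminus (m n : nat) (X : 'M[R]_(m, n)) (nu w : 'I_m -> R) (j : 'I_n) : R :=
  fdet (colrem X j) nu w.

Definition hval (m n : nat) (X : 'M[R]_(m, n)) (nu w : 'I_m -> R) : R :=
  if 0 < fdet X nu w then (\tr (invmx (infoM X nu w)))^-1 else 0.

Definition wpath (m : nat) (w : 'I_m -> R) (i : 'I_m) (x : R) : 'I_m -> R :=
  fun l => if l == i then x else (1 - x) / (1 - w i) * w l.

Definition f_i m n (X : 'M[R]_(m, n)) nu w i (x : R) := fdet X nu (wpath w i x).
Definition fm_i m n (X : 'M[R]_(m, n)) nu w i j (x : R) := fminus X nu (wpath w i x) j.
Definition h_i m n (X : 'M[R]_(m, n)) nu w i (x : R) := hval X nu (wpath w i x).

Definition cb m n (X : 'M[R]_(m, n)) nu w i : R :=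
  if 0 < w i then f_i X nu w i 0 else fdet X nu w.
Definition ca m n (X : 'M[R]_(m, n)) nu w i : R :=
  if 0 < w i then
    (fdet X nu w - cb X nu w i * (1 - w i) ^+ n) / (w i * (1 - w i) ^+ (n - 1))
  else 2 ^+ n * f_i X nu w i (1 / 2) - cb X nu w i.
Definition cbj m n (X : 'M[R]_(m, n)) nu w i j : R :=
  if 0 < w i then fm_i X nu w i j 0 else fminus X nu w j.
Definition caj m n (X : 'M[R]_(m, n)) nu w i j : R :=
  if 0 < w i then
    (fminus X nu w j - cbj X nu w i j * (1 - w i) ^+ (n - 1))
      / (w i * (1 - w i) ^+ (n - 2))
  else 2 ^+ (n - 1) * fm_i X nu w i j (1 / 2) - cbj X nu w i j.
Definition cA m n (X : 'M[R]_(m, n)) nu w i : R := \sum_(j < n) caj X nu w i j.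
Definition cB m n (X : 'M[R]_(m, n)) nu w i : R := \sum_(j < n) cbj X nu w i j.

Definition unique_max_at (g : R -> R) (x0 v : R) : Prop :=
  [/\ 0 <= x0 <= 1, g x0 = v & forall x, 0 <= x <= 1 -> x != x0 -> g x < v].

End Defs.

(* Main.v *)
From HB Require Import structures.
From mathcomp Require Import all_boot all_order all_algebra.
From mathcomp Require Import polyrcf ring lra.
Require Import Defs.
Set Implicit Arguments. Unset Strict Implicit. Unset Printing Implicit Defensive.
Import Order.TTheory GRing.Theory Num.Theory.
Local Open Scope ring_scope.

Section LinAlg.
Variable R : rcfType.

Definition Gram m n (Y : 'M[R]_(m, n)) (d : 'I_m -> R) : 'M[R]_n :=
  Y^T *m diag_mx (\row_l d l) *m Y.

Definition qf n (P : 'M[R]_n) (v : 'rV[R]_n) : R := (v *m P *m v^T) 0 0.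

Lemma infoM_Gram m n (X : 'M[R]_(m, n)) nu w :
  infoM X nu w = Gram X (fun l => w l * nu l).
Proof. by []. Qed.

Lemma GramE m n (Y : 'M[R]_(m, n)) d a b :
  Gram Y d a b = \sum_l d l * (Y l a * Y l b).
Proof.
rewrite /Gram !mxE; apply: eq_bigr => l _.
rewrite mul_mx_diag !mxE; ring.
Qed.

Lemma qf_Gram m n (Y : 'M[R]_(m, n)) d (v : 'rV[R]_n) :
  qf (Gram Y d) v = \sum_l d l * ((v *m Y^T) 0 l) ^+ 2.
Proof.
rewrite /qf /Gram !mulmxA -[v *m Y^T *m _ *m Y *m v^T]mulmxA.
have -> : Y *m v^T = (v *m Y^T)^T by rewrite trmx_mul trmxK.
set z := v *m Y^T.
rewrite mxE; apply: eq_bigr => l _.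
rewrite mul_mx_diag !mxE; ring.
Qed.

Lemma Gram_ker m n (Y : 'M[R]_(m, n)) d (v : 'rV[R]_n) :
  (forall l, d l * (v *m Y^T) 0 l = 0) -> v *m Gram Y d = 0.
Proof.
move=> H; rewrite /Gram !mulmxA.
have -> : v *m Y^T *m diag_mx (\row_l d l) = 0.
  by apply/matrixP => i j; rewrite mul_mx_diag (ord1 i) mxE [(\row_l d l) 0 j]mxE mulrC (H j) mxE.
by rewrite mul0mx.
Qed.

Lemma qf_Gram_ge0 m n (Y : 'M[R]_(m, n)) d (v : 'rV[R]_n) :
  (forall l, 0 <= d l) -> 0 <= qf (Gram Y d) v.
Proof.
move=> d0; rewrite qf_Gram; apply: sumr_ge0 => l _.
by rewrite mulr_ge0 ?sqr_ge0.
Qed.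

Lemma qf_Gram0 m n (Y : 'M[R]_(m, n)) d (v : 'rV[R]_n) :
  (forall l, 0 <= d l) -> qf (Gram Y d) v = 0 ->
  forall l, d l * (v *m Y^T) 0 l = 0.
Proof.
move=> d0; rewrite qf_Gram => /psumr_eq0P H l.
have := H (fun l' _ => mulr_ge0 (d0 l') (sqr_ge0 _)) l isT.
move=> e; apply/eqP; rewrite -sqrf_eq0; apply/eqP.
have -> : (d l * (v *m Y^T) 0 l) ^+ 2 = d l * (d l * (v *m Y^T) 0 l ^+ 2) by ring.
by rewrite e mulr0.
Qed.

Lemma Gram_pd m n (Y : 'M[R]_(m, n)) d (v : 'rV[R]_n) :
  (forall l, 0 <= d l) -> \det (Gram Y d) != 0 -> v != 0 ->
  0 < qf (Gram Y d) v.
Proof.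
move=> d0 dn0 vn0; rewrite lt_def qf_Gram_ge0 // andbT.
apply/eqP => /(qf_Gram0 d0) /Gram_ker H.
by move/negP: dn0; apply; apply/det0P; exists v.
Qed.


Lemma qf_eq0_of_ker n (P : 'M[R]_n) v : v *m P = 0 -> qf P v = 0.
Proof. by move=> H; rewrite /qf H mul0mx mxE. Qed.

Lemma qf_scalar n (P : 'M[R]_n) (s : R) v :
  qf (P + s%:M) v = qf P v + s * \sum_k v 0 k ^+ 2.
Proof.
rewrite /qf mulmxDr mulmxDl mxE; congr (_ + _).
rewrite mul_mx_scalar -scalemxAl mxE; congr (_ * _).
by rewrite mxE; apply: eq_bigr => k _; rewrite mxE expr2.
Qed.

Lemma charpoly_eval n (P : 'M[R]_n) (s : R) :
  (char_poly (- P)).[s] = \det (P + s%:M).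
Proof.
rewrite -horner_evalE /char_poly -det_map_mx; congr (\det _).
apply/matrixP => i j; rewrite !mxE /= horner_evalE.
by case: (i == j); rewrite /= ?mulr1n ?mulr0n !hornerE opprK // addrC.
Qed.

Lemma pd_det_pos n (P : 'M[R]_n) :
  (forall v, v != 0 -> 0 < qf P v) -> 0 < \det P.
Proof.
move=> Hpd.
have H s : 0 <= s -> \det (P + s%:M) != 0.
  move=> s0; apply/negP => /det0P [v vn0 vP].
  have := qf_eq0_of_ker vP; rewrite qf_scalar => e.
  have h1 := Hpd v vn0.
  have h2 : 0 <= s * \sum_k v 0 k ^+ 2 by rewrite mulr_ge0 // sumr_ge0 // => k _; rewrite sqr_ge0.
  lra.
set q := char_poly (- P).
have lq : lead_coef q = 1 by apply/monicP; exact: char_poly_monic.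
have [N HN] : exists N, forall x, N <= x -> lead_coef q <= q.[x].
  by apply: poly_pinfty_gt_lc; rewrite lq ltr01.
set N' := Num.max N 0.
have qN : 0 < q.[N'].
  by apply: lt_le_trans (HN _ _); rewrite ?lq ?ltr01 // le_max lexx.
have q0 : q.[0] = \det P by rewrite charpoly_eval; congr (\det _); apply/matrixP => i j; rewrite !mxE mul0rn addr0.
rewrite -q0; rewrite ltNge; apply/negP => q0le.
have N'0 : 0 <= N' by rewrite le_max lexx orbT.
have [x xin rx] := polyrcf.poly_ivt N'0 (mulr_le0_ge0 q0le (ltW qN)).
have x0 : 0 <= x by move: xin; rewrite in_itv /= => /andP [].
by move: (H x x0); rewrite -charpoly_eval (rootP rx) eqxx.
Qed.


Lemma Gram_det_ge0 m n (Y : 'M[R]_(m, n)) d :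
  (forall l, 0 <= d l) -> 0 <= \det (Gram Y d).
Proof.
move=> d0; have [->|dn0] := eqVneq (\det (Gram Y d)) 0; first by [].
by apply/ltW/pd_det_pos => v vn0; apply: Gram_pd.
Qed.

Definition Emx n (j : 'I_n) : 'M[R]_(n.-1, n) :=
  \matrix_(k, k') ((lift j k == k')%:R).

Lemma skip_lift n (j : 'I_n) (k : 'I_n.-1) : skip_ord j k = lift j k.
Proof.
apply: val_inj; rewrite /skip_ord val_insubd /=.
by have := ltn_ord (lift j k); rewrite /= => ->.
Qed.

Lemma colrem_E m n (Y : 'M[R]_(m, n)) j : colrem Y j = Y *m (Emx j)^T.
Proof.
apply/matrixP => l k; rewrite !mxE skip_lift.
rewrite (bigD1 (lift j k)) //= big1 ?addr0; first by rewrite !mxE eqxx mulr1.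
by move=> k' /negPf nk; rewrite !mxE eq_sym nk mulr0.
Qed.

Lemma rowcol_E n (P : 'M[R]_n) j :
  row' j (col' j P) = Emx j *m P *m (Emx j)^T.
Proof.
apply/matrixP => k l; rewrite !mxE.
rewrite (bigD1 (lift j l)) //= big1 ?addr0; last first.
  by move=> k' /negPf nk; rewrite !mxE eq_sym nk mulr0.
rewrite !mxE eqxx mulr1.
rewrite (bigD1 (lift j k)) //= big1 ?addr0; last first.
  by move=> k' /negPf nk; rewrite !mxE eq_sym nk mul0r.
by rewrite !mxE eqxx mul1r.
Qed.

Lemma Gram_colrem m n (Y : 'M[R]_(m, n)) d j :
  Gram (colrem Y j) d = Emx j *m Gram Y d *m (Emx j)^T.
Proof. by rewrite /Gram colrem_E trmx_mul trmxK !mulmxA. Qed.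

Lemma qf_E n (P : 'M[R]_n) j v : qf (Emx j *m P *m (Emx j)^T) v = qf P (v *m Emx j).
Proof. by rewrite /qf trmx_mul !mulmxA. Qed.

Lemma E_lift n (j : 'I_n) (v : 'rV[R]_n.-1) k : (v *m Emx j) 0 (lift j k) = v 0 k.
Proof.
rewrite !mxE (bigD1 k) //= big1 ?addr0; first by rewrite !mxE eqxx mulr1.
by move=> k' nk; rewrite !mxE (inj_eq (@lift_inj _ j)) (negPf nk) mulr0.
Qed.

Lemma E_j n (j : 'I_n) (v : 'rV[R]_n.-1) : (v *m Emx j) 0 j = 0.
Proof.
by rewrite !mxE big1 // => k _; rewrite !mxE eq_sym (negPf (neq_lift j k)) mulr0.
Qed.

Lemma E_neq0 n (j : 'I_n) (v : 'rV[R]_n.-1) : v != 0 -> v *m Emx j != 0.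
Proof.
apply: contraNneq => H; apply/eqP/matrixP => i k.
by rewrite (ord1 i) -(E_lift j) H !mxE.
Qed.

Lemma Gram_colrem_pos m n (Y : 'M[R]_(m, n)) d j :
  (forall l, 0 <= d l) -> \det (Gram Y d) != 0 -> 0 < \det (Gram (colrem Y j) d).
Proof.
move=> d0 dn0; apply: pd_det_pos => v vn0.
by rewrite Gram_colrem qf_E; apply: Gram_pd => //; apply: E_neq0.
Qed.

Lemma tr_invmx n (M : 'M[R]_n) : \det M != 0 ->
  \tr (invmx M) = (\det M)^-1 * \sum_j \det (row' j (col' j M)).
Proof.
move=> dn0; rewrite /invmx unitmxE unitfE dn0 mxtraceZ; congr (_ * _).
rewrite /mxtrace; apply: eq_bigr => j _; rewrite mxE /cofactor.
by rewrite -signr_odd addnn odd_double expr0 mul1r.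
Qed.


Definition upd n (P : 'M[R]_n) (k : 'I_n) (r : 'rV[R]_n) : 'M[R]_n :=
  \matrix_(i, j) (if i == k then r 0 j else P i j).

Lemma row_upd n (P : 'M[R]_n) k r : row k (upd P k r) = r.
Proof. by apply/matrixP => i j; rewrite !mxE eqxx (ord1 i). Qed.

Lemma row'_upd n (P : 'M[R]_n) k r : row' k (upd P k r) = row' k P.
Proof. by apply/matrixP => i j; rewrite !mxE eq_sym (negPf (neq_lift k i)). Qed.

Lemma det_upd_addrow n (U : 'M[R]_n) u t c : u != t ->
  \det (upd U u (row u U + c *: row t U)) = \det U.
Proof.
move=> ut.
rewrite (@determinant_multilinear _ _ _ U (upd U u (row t U)) u 1 c).
- rewrite (@determinant_alternate _ _ (upd U u (row t U)) u t) ?mulr0 ?addr0 ?mul1r //.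
  by move=> j; rewrite !mxE eqxx eq_sym (negPf ut).
- by rewrite row_upd row_upd scale1r.
- by rewrite row'_upd.
- by rewrite !row'_upd.
Qed.

Definition Qs n (P : 'M[R]_n) (al : 'cV[R]_n) (r : 'rV[R]_n) (s : seq 'I_n) :=
  P + \matrix_(i, j) (if i \in s then al i 0 * r 0 j else 0).

Lemma Qs_cons n (P : 'M[R]_n) al r u s : u \notin s ->
  Qs P al r (u :: s) = Qs (Qs P al r [:: u]) al r s.
Proof.
move=> us; apply/matrixP => i j; rewrite !mxE !inE.
by case: eqP => [->|_] /=; rewrite ?(negPf us) addr0.
Qed.

Lemma rank1_seq n (al : 'cV[R]_n) (r : 'rV[R]_n) s : uniq s -> forall P,
  \det (Qs P al r s) = \det P + \sum_(k <- s) al k 0 * \det (upd P k r).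
Proof.
elim: s => [|u s IH] /=.
  move=> _ P; rewrite big_nil addr0; congr (\det _).
  by apply/matrixP => i j; rewrite !mxE addr0.
case/andP => us us' P; rewrite Qs_cons // IH // big_cons addrA.
congr (_ + _).
  rewrite (@determinant_multilinear _ _ _ P (upd P u r) u 1 (al u 0)) ?mul1r //.
  - by apply/matrixP => i j; rewrite !mxE !inE eqxx mul1r.
  - by apply/matrixP => i j; rewrite !mxE !inE eq_sym (negPf (neq_lift u i)) addr0.
  - by rewrite row'_upd; apply/matrixP => i j; rewrite !mxE !inE eq_sym (negPf (neq_lift u i)) addr0.
rewrite !big_seq; apply: eq_bigr => k ks; congr (_ * _).
have uk : k != u by apply: contraNneq us => <-.
rewrite -(@det_upd_addrow _ (upd P k r) u k (al u 0)) 1?eq_sym //.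
congr (\det _); apply/matrixP => i j; rewrite !mxE !inE.
case: (eqVneq i k) => [->|ik].
  by case: ifP => // /eqP kuE; rewrite kuE eqxx in uk.
case: ifP => [/eqP ->|_]; last by rewrite addr0.
case: ifP => [/eqP ukE|_]; first by rewrite ukE eqxx in uk.
by rewrite eqxx mulrC.
Qed.

Lemma cofactor_upd n (P : 'M[R]_n) k r j : cofactor (upd P k r) k j = cofactor P k j.
Proof.
rewrite /cofactor; congr (_ * \det _).
by apply/matrixP => a b; rewrite !mxE eq_sym (negPf (neq_lift k a)).
Qed.

Lemma det_rank1 n (P : 'M[R]_n) (al : 'cV[R]_n) (r : 'rV[R]_n) :
  \det (P + al *m r) = \det P + (r *m \adj P *m al) 0 0.
Proof.
have -> : P + al *m r = Qs P al r (enum 'I_n).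
  apply/matrixP => i j; rewrite !mxE mem_enum big_ord1; done.
rewrite rank1_seq ?enum_uniq //; congr (_ + _).
rewrite big_enum /= mxE; apply: eq_bigr => k _.
rewrite (expand_det_row _ k) mxE big_distrr big_distrl /=.
apply: eq_bigr => j _; rewrite cofactor_upd !mxE eqxx; ring.
Qed.


Lemma infoM_ext m n (X : 'M[R]_(m, n)) nu w1 w2 : w1 =1 w2 -> infoM X nu w1 = infoM X nu w2.
Proof.
move=> e; rewrite /infoM /Wmx; congr (_ *m _ *m _); congr diag_mx.
by apply/matrixP => a b; rewrite !mxE e.
Qed.

End LinAlg.

Section Path.
Variable R : rcfType.
Variables (m : nat) (nu w : 'I_m -> R) (i : 'I_m).
Hypothesis wi1 : w i < 1.

Definition d0 := fun l => wpath w i 0 l * nu l.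

Lemma infoM_path n (Y : 'M[R]_(m, n)) x :
  infoM Y nu (wpath w i x) =
  (1 - x) *: Gram Y d0 + ((x * nu i) *: (row i Y)^T) *m row i Y.
Proof.
apply/matrixP => a b; rewrite infoM_Gram GramE [in RHS]mxE [in RHS]mxE GramE.
rewrite [X in _ = _ + X]mxE big_ord1 !mxE.
rewrite big_distrr /= (bigD1 i) //= [in RHS](bigD1 i) //= /d0 /wpath eqxx.
rewrite mul0r mul0r mulr0 add0r addrC; congr (_ + _); last by ring.
by apply: eq_bigr => l /negPf ->; rewrite subr0; ring.
Qed.

Definition bY n (Y : 'M[R]_(m, n)) := \det (Gram Y d0).
Definition aY n (Y : 'M[R]_(m, n)) :=
  nu i * (row i Y *m \adj (Gram Y d0) *m (row i Y)^T) 0 0.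

Lemma fdet_path n (Y : 'M[R]_(m, n)) x :
  fdet Y nu (wpath w i x) = (1 - x) ^+ n * bY Y + x * (1 - x) ^+ n.-1 * aY Y.
Proof.
rewrite /fdet infoM_path det_rank1 detZ adjZ /bY /aY; congr (_ + _).
rewrite -!scalemxAr -scalemxAl mxE mxE; ring.
Qed.

Lemma wpath_wi : wpath w i (w i) =1 w.
Proof.
move=> l; rewrite /wpath; case: eqP => [->//|_].
by rewrite divff ?mul1r // subr_eq0 gt_eqF.
Qed.

Lemma wpath_ge0 x l : (forall l, 0 <= w l) -> 0 <= x <= 1 -> 0 <= wpath w i x l.
Proof.
move=> w0 /andP [x0 x1]; rewrite /wpath; case: eqP => // _.
by rewrite mulr_ge0 // divr_ge0 // subr_ge0 // ltW.
Qed.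


Lemma fdet_w n (Y : 'M[R]_(m, n)) : fdet Y nu w = fdet Y nu (wpath w i (w i)).
Proof. by rewrite /fdet (infoM_ext _ _ wpath_wi). Qed.

Hypothesis w0 : forall l, 0 <= w l.

Lemma gen_b n (Y : 'M[R]_(m, n)) :
  (if 0 < w i then fdet Y nu (wpath w i 0) else fdet Y nu w) = bY Y.
Proof.
have -> : (if 0 < w i then fdet Y nu (wpath w i 0) else fdet Y nu w) =
          fdet Y nu (wpath w i 0).
  case: ifP => // /negbT; rewrite -leNgt => wi0.
  have e : w i = 0 by apply/le_anti; rewrite wi0 w0.
  by rewrite fdet_w e.
by rewrite fdet_path subr0 expr1n mul1r !mul0r addr0.
Qed.

Lemma gen_a n (Y : 'M[R]_(m, n)) : (0 < n)%N ->
  (if 0 < w i then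
     (fdet Y nu w - (if 0 < w i then fdet Y nu (wpath w i 0) else fdet Y nu w)
        * (1 - w i) ^+ n) / (w i * (1 - w i) ^+ n.-1)
   else 2 ^+ n * fdet Y nu (wpath w i (1 / 2))
        - (if 0 < w i then fdet Y nu (wpath w i 0) else fdet Y nu w)) = aY Y.
Proof.
move=> n0; rewrite gen_b; case: ifP => wi0.
  rewrite fdet_w fdet_path.
  have h1 : w i != 0 by rewrite gt_eqF.
  have h2 : (1 - w i) ^+ n.-1 != 0 by rewrite expf_neq0 // subr_eq0 gt_eqF.
  by field; rewrite h1 h2.
move/negbT: wi0; rewrite -leNgt => wi0.
have e : w i = 0 by apply/le_anti; rewrite wi0 w0.
rewrite fdet_path.
have -> : 1 - 1 / 2 = 1 / 2 :> R by field.
move: (bY Y) (aY Y) => b a; clear Y.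
case: n n0 => // n _ /=.
rewrite !exprS div1r exprVn.
have h2 : (2 : R) != 0 by rewrite pnatr_eq0.
have ht : (2 : R) ^+ n != 0 by rewrite expf_neq0.
by move: (2 ^+ n) ht => t ht; field.
Qed.


Hypothesis nu0 : forall l, 0 <= nu l.

Lemma d0_ge0 l : 0 <= d0 l.
Proof. by rewrite /d0 mulr_ge0 // wpath_ge0 // lexx ler01. Qed.

Lemma Gram_sym m' n (Y : 'M[R]_(m', n)) d : (Gram Y d)^T = Gram Y d.
Proof. by rewrite /Gram !trmx_mul tr_diag_mx trmxK mulmxA. Qed.

Lemma aY_zero n (Y : 'M[R]_(m, n)) :
  0 < bY Y -> aY Y = 0 -> nu i = 0 \/ row i Y = 0.
Proof.
move=> bp; rewrite /aY => /eqP; rewrite mulf_eq0 => /orP [/eqP -> | /eqP H]; [by left | right; move: H].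
set P := Gram Y d0; set r := row i Y.
have dn0 : \det P != 0 by rewrite gt_eqF.
have Psym : P^T = P by rewrite Gram_sym.
have Ppd v : v != 0 -> 0 < qf P v by move=> vn0; apply: Gram_pd => //; exact: d0_ge0.
clearbody P => H.
have unitP : P \in unitmx by rewrite unitmxE unitfE.
have adjE : \adj P = \det P *: invmx P.
  by rewrite /invmx unitP scalerA divff // scale1r.
move: H; rewrite adjE -scalemxAr -scalemxAl mxE => /eqP; rewrite mulf_eq0 (negPf dn0) /= => /eqP H.
set y := r *m invmx P.
have qy : qf P y = 0.
  rewrite /qf /y trmx_mul trmx_inv Psym -(mulmxA r (invmx P) P) (mulVmx unitP) mulmx1.
  by rewrite mulmxA.
have y0 : y = 0.
  have [//|yn0] := eqVneq y 0.
  by have := Ppd y yn0; rewrite qy ltxx.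
by rewrite -(mulmx1 r) -(mulVmx unitP) mulmxA -/y y0 mul0mx.
Qed.

Lemma A_zero p (X : 'M[R]_(m, p)) : (1 < p)%N ->
  (forall j, 0 < bY (colrem X j)) -> (forall j, aY (colrem X j) = 0) -> aY X = 0.
Proof.
move=> p1 bp ap.
have [nu_0|nun0] := eqVneq (nu i) 0; first by rewrite /aY nu_0 mul0r.
have rows j : row i (colrem X j) = 0.
  by case: (aY_zero (bp j) (ap j)) => // e; rewrite e eqxx in nun0.
have rX : row i X = 0.
  apply/matrixP => z k; rewrite (ord1 z) mxE [RHS]mxE.
  have [j jk] : exists j : 'I_p, j != k.
    case: (eqVneq k (Ordinal (ltn_trans (ltnSn 0) p1))) => [ek|nk].
      exists (Ordinal p1); rewrite ek; apply/eqP => /(congr1 val) //.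
    by exists (Ordinal (ltn_trans (ltnSn 0) p1)); rewrite eq_sym.
  have [k' ek _] := unlift_some jk.
  have := congr1 (fun M : 'rV[R]_p.-1 => M 0 k') (rows j).
  by rewrite !mxE skip_lift -ek.
by rewrite /aY rX mul0mx mxE big1 ?mulr0 // => k _; rewrite mxE mul0r.
Qed.


Lemma kerv p (X : 'M[R]_(m, p)) j : bY (colrem X j) = 0 ->
  exists u : 'rV[R]_p, [/\ u != 0, u 0 j = 0 & forall l, d0 l * (u *m X^T) 0 l = 0].
Proof.
move/eqP/det0P => [v vn0 vP]; exists (v *m @Emx R _ j); split.
- exact: E_neq0.
- exact: E_j.
- apply: qf_Gram0; first exact: d0_ge0.
  by rewrite -qf_E -Gram_colrem; apply: qf_eq0_of_ker.
Qed.

Lemma B_contra p (X : 'M[R]_(m, p)) : (0 < p)%N -> \det (infoM X nu w) != 0 ->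
  (forall j, bY (colrem X j) = 0) -> False.
Proof.
move=> p0 dn0 Hb.
have [u0 [u0n u0j H0]] := kerv (Hb (Ordinal p0)).
have : [exists k, u0 0 k != 0].
  apply: contraNT u0n => /existsPn H; apply/eqP/matrixP => a k.
  by rewrite (ord1 a) mxE; apply/eqP/negPn/H.
case/existsP => k uk.
have [v [vn vk Hv]] := kerv (Hb k).
pose q (u : 'rV[R]_p) := (u *m X^T) 0 i.
have [z [zn Hz qz]] : exists z : 'rV[R]_p,
    [/\ z != 0, (forall l, d0 l * (z *m X^T) 0 l = 0) & q z = 0].
  case: (eqVneq (q u0) 0) => [e|n0]; first by exists u0.
  case: (eqVneq (q v) 0) => [e|nv]; first by exists v.
  have zE l : ((q v *: u0 - q u0 *: v) *m X^T) 0 l =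
      q v * (u0 *m X^T) 0 l - q u0 * (v *m X^T) 0 l.
    by rewrite mulmxBl -!scalemxAl !mxE.
  exists (q v *: u0 - q u0 *: v); split.
  - apply/eqP => /matrixP /(_ 0 k); rewrite !mxE vk mulr0 subr0 => /eqP.
    by rewrite mulf_eq0 (negPf nv) (negPf uk).
  - move=> l; rewrite zE mulrBr.
    have -> : d0 l * (q v * (u0 *m X^T) 0 l) = q v * (d0 l * (u0 *m X^T) 0 l) by ring.
    have -> : d0 l * (q u0 * (v *m X^T) 0 l) = q u0 * (d0 l * (v *m X^T) 0 l) by ring.
    by rewrite H0 Hv !mulr0 subrr.
  - by rewrite /q zE -/(q u0) -/(q v) mulrC subrr.
move/negP: dn0; apply; apply/det0P; exists z => //.
rewrite infoM_Gram; apply: Gram_ker => l.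
case: (eqVneq l i) => [->|li]; first by move: qz; rewrite /q => ->; rewrite mulr0.
have e : w l * nu l = (1 - w i) * d0 l.
  rewrite /d0 /wpath (negPf li) subr0; field.
  by rewrite subr_eq0 gt_eqF.
by rewrite e -mulrA Hz mulr0.
Qed.

End Path.

Section Ana.
Variable R : rcfType.

Lemma frac01 (u v : R) : 0 < u * v -> u * v < v * v -> 0 < u / v < 1.
Proof.
move=> h1 h2.
have vn0 : v != 0 by apply: contraTneq h1 => ->; rewrite mulr0 ltxx.
have vv : 0 < v * v by rewrite lt_def mulf_neq0 //= -expr2 sqr_ge0.
have -> : u / v = (u * v) / (v * v) by field.
by rewrite divr_gt0 // ltr_pdivrMr // mul1r h2.
Qed.

Lemma lim_ge0 (k : nat) (a b : R) :
  (forall x, 0 <= x < 1 -> 0 <= (1 - x) ^+ k * (a * x + b * (1 - x))) ->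
  0 <= a /\ 0 <= b.
Proof.
move=> H.
have b0 : 0 <= b.
  by have := H 0; rewrite lexx ltr01 subr0 expr1n mul1r mulr0 add0r mulr1; apply.
split => //; rewrite leNgt; apply/negP => an.
have ba : 0 < b - a by lra.
set x := (2 * b - a) / (2 * (b - a)).
have x0 : 0 <= x by rewrite divr_ge0 //; lra.
have x1 : x < 1 by rewrite /x ltr_pdivrMr ?mul1r; lra.
have := H x; rewrite x0 x1 => /(_ isT).
have -> : a * x + b * (1 - x) = a / 2.
  rewrite /x; field; rewrite subr_eq0 gt_eqF //; lra.
have : 0 < (1 - x) ^+ k by rewrite exprn_gt0 // subr_gt0.
move=> h1 h2; have : 0 <= a / 2 by move: h2; rewrite pmulr_rge0.
lra.
Qed.

Lemma fact_pow (n : nat) (x a b : R) : (0 < n)%N ->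
  (1 - x) ^+ n * b + x * (1 - x) ^+ n.-1 * a = (1 - x) ^+ n.-1 * (a * x + b * (1 - x)).
Proof. by case: n => // n _; rewrite exprS /=; ring. Qed.

Variables (a b A B wi : R) (h : R -> R).
Hypotheses (a0 : 0 <= a) (b0 : 0 <= b) (A0 : 0 <= A) (B0 : 0 < B)
  (AaH : A = 0 -> a = 0) (wi0 : 0 <= wi)
  (Gwi : 0 < a * wi + b * (1 - wi))
  (hE : forall x, 0 <= x <= 1 -> h x =
     if (x < 1) && (0 < a * x + b * (1 - x))
     then (1 - x) * (a * x + b * (1 - x)) / (A * x + B * (1 - x)) else 0).

Let G x := a * x + b * (1 - x).
Let T x := A * x + B * (1 - x).
Let g x := (1 - x) * G x / T x.

Lemma apos_b0 : b = 0 -> 0 < a.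
Proof.
move=> e; have := Gwi; rewrite e mul0r addr0 => H.
rewrite lt_def a0 andbT; apply: contraTneq H => ->; rewrite mul0r ltxx //.
Qed.

Lemma apb : 0 < a + b.
Proof.
have [e|bn0] := eqVneq b 0; first by rewrite e addr0; apply: apos_b0.
have hb : 0 < b by rewrite lt_def bn0 b0.
have ha := a0. lra.
Qed.

Lemma T_pos x : 0 <= x < 1 -> 0 < T x.
Proof.
move=> /andP [x0 x1]; rewrite /T.
have h1 := mulr_ge0 A0 x0.
have h2 : 0 < B * (1 - x) by rewrite mulr_gt0 // subr_gt0.
lra.
Qed.

Lemma G_pos x : 0 < x < 1 -> 0 < G x.
Proof.
move=> /andP [x0 x1]; have := apb; rewrite /G => ab.
have h1 : 0 < (a + b) * (x * (1 - x)) by rewrite mulr_gt0 // mulr_gt0 // subr_gt0.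
have h2 : 0 <= a * (x * x) by rewrite mulr_ge0 // mulr_ge0 // ltW.
have h3 : 0 <= b * ((1 - x) * (1 - x)) by rewrite mulr_ge0 // mulr_ge0 // subr_ge0 ltW.
nra.
Qed.

Lemma h_cases x : 0 <= x <= 1 -> h x = 0 \/ (x < 1 /\ 0 < G x /\ h x = g x).
Proof.
move=> hx; rewrite hE //; case: (boolP (x < 1)) => x1 /=; last by left.
by case: ifP => Gx; [right | left].
Qed.

Lemma h_in x : 0 < x < 1 -> h x = g x.
Proof.
move=> /andP [x0 x1]; rewrite hE; last by rewrite !ltW.
by rewrite x1 /= (G_pos (x:=x)) ?x0.
Qed.

Lemma uniq_help x0 V : 0 < V ->
  (forall x, 0 <= x < 1 -> 0 < G x -> x != x0 -> g x < V) ->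
  forall x, 0 <= x <= 1 -> x != x0 -> h x < V.
Proof.
move=> V0 H x hx xn; case: (h_cases hx) => [->//|[x1 [Gx ->]]].
by apply: H => //; case/andP: hx => -> _.
Qed.


Lemma h0E : 0 < b -> h 0 = b / B.
Proof.
move=> bp; rewrite hE ?lexx ?ler01 // ltr01 /=.
have -> : a * 0 + b * (1 - 0) = b by ring.
rewrite bp; congr (_ / _); ring.
Qed.

Lemma case4 :
  ~ [/\ A != B, 0 < A, 0 < B, b < a & (b * A < a * B /\ b * A < (a - b) * B)] ->
  ~ (A = B /\ 2 * b < a) -> 0 < b / B /\ unique_max_at h 0 (b / B).
Proof.
move=> nc1 nc2.
have ha := a0; have hb := b0; have hA := A0; have hB := B0.
have bp : 0 < b.
  rewrite lt_def b0 andbT; apply/eqP => e.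
  have ap := apos_b0 e.
  have Ap : 0 < A.
    rewrite lt_def A0 andbT; apply/eqP => eA; have := AaH eA; lra.
  have [eAB|nAB] := eqVneq A B.
    by apply: nc2; split => //; rewrite e; lra.
  apply: nc1; split => //; rewrite e; first lra.
  by split; nra.
split; first by rewrite divr_gt0.
split; first by rewrite lexx ler01.
  by rewrite h0E.
apply: uniq_help => //; first by rewrite divr_gt0.
move=> x /andP [x0 x1] Gx xn0.
have xp : 0 < x by rewrite lt_def xn0 x0.
set ph0 := a * B - b * A - b * B.
have ph0le : ph0 <= 0.
  rewrite leNgt; apply/negP => ph0p.
  have ab : b < a.
    rewrite ltNge; apply/negP => ab.
    have : (a - b) * B <= 0 by rewrite mulr_le0_ge0 ?subr_le0 // ltW.
    have : 0 <= b * A by rewrite mulr_ge0.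
    rewrite /ph0 in ph0p; nra.
  have Ap : 0 < A.
    rewrite lt_def A0 andbT; apply/eqP => eA; have := AaH eA; lra.
  have [eAB|nAB] := eqVneq A B.
    apply: nc2; split => //; rewrite /ph0 eAB in ph0p.
    have : 0 < (a - 2 * b) * B by nra.
    by rewrite pmulr_lgt0 // subr_gt0.
  apply: nc1; split => //; rewrite /ph0 in ph0p.
  have : 0 <= b * B by rewrite mulr_ge0 // ltW.
  by move=> ?; split; nra.
set ph := ph0 * (1 - x) + (- (b * A)) * x.
have phn : ph < 0.
  have [bA0|bAp] := eqVneq (b * A) 0.
    have eA : A = 0 by move/eqP: bA0; rewrite mulf_eq0 gt_eqF //= => /eqP.
    have ea := AaH eA.
    have : ph0 < 0 by rewrite /ph0 eA ea; nra.
    rewrite /ph bA0 oppr0 mul0r addr0 => ?.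
    by rewrite nmulr_rlt0 // subr_gt0.
  have bAp' : 0 < b * A by rewrite lt_def bAp mulr_ge0.
  have : ph0 * (1 - x) <= 0 by rewrite mulr_le0_ge0 // subr_ge0 ltW.
  have : 0 < b * A * x by rewrite mulr_gt0.
  rewrite /ph; lra.
have Tp : 0 < T x by apply: T_pos; rewrite x0 x1.
have key : b / B - g x = (x * - ph) / (B * T x).
  rewrite /g /G /ph /ph0 /T; field.
  apply/andP; split; first by rewrite gt_eqF.
  by move: Tp; rewrite /T => Tp; rewrite gt_eqF.
have : 0 < (x * - ph) / (B * T x).
  by rewrite divr_gt0 ?mulr_gt0 // oppr_gt0.
lra.
Qed.


Lemma case2 : A = B /\ 2 * b < a ->
  let xs := (a - 2 * b) / (2 * a - 2 * b) in
  [/\ 0 < a ^+ 2 / (4 * (a - b) * B), 0 < xs < 1 &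
      unique_max_at h xs (a ^+ 2 / (4 * (a - b) * B))].
Proof.
case=> eAB ab xs.
have ha := a0; have hb := b0; have hB := B0.
have ap : 0 < a by lra.
have cp : 0 < a - b by lra.
have xs01 : 0 < xs < 1.
  apply: frac01; first by rewrite mulr_gt0 //; lra.
  have : 0 < 2 * a - 2 * b by lra.
  have : a - 2 * b < 2 * a - 2 * b by lra.
  nra.
set V := a ^+ 2 / (4 * (a - b) * B).
have Vp : 0 < V by rewrite divr_gt0 ?exprn_gt0 // mulr_gt0 // mulr_gt0 //; lra.
have key x : g x = V - (a - b) * (x - xs) ^+ 2 / B.
  have TB : T x = B by rewrite /T eAB; ring.
  rewrite /g TB /V /xs /G; field.
  have h1 : 2 * a - 2 * b != 0 by rewrite gt_eqF //; lra.
  have h2 : a - b != 0 by rewrite gt_eqF.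
  have h3 : B != 0 by rewrite gt_eqF.
  by rewrite h1 h2 h3.
split => //.
split; first by case/andP: xs01 => /ltW -> /ltW ->.
  by rewrite h_in // key subrr expr0n /= mulr0 mul0r subr0.
apply: uniq_help => // x _ _ xn.
rewrite key; have : 0 < (a - b) * (x - xs) ^+ 2 / B.
  rewrite divr_gt0 // mulr_gt0 // lt_def sqrf_eq0 subr_eq0 xn sqr_ge0 //.
lra.
Qed.


Lemma case1 :
  [/\ A != B, 0 < A, 0 < B, b < a & (b * A < a * B /\ b * A < (a - b) * B)] ->
  let ts := Num.sqrt (A * (a * B - b * A) / (a - b)) in
  let xs := (ts - B) / (A - B) in
  [/\ Num.min A B < ts < Num.max A B, 0 < xs < 1 &
      unique_max_at h xs
        (((Num.sqrt (A * (a - b)) - Num.sqrt (a * B - b * A)) / (A - B)) ^+ 2)].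
Proof.
case=> nAB Ap _ ab [h1 h2] ts xs.
have ha := a0; have hb := b0; have hB := B0.
set c := a - b; set d := a * B - b * A.
have cp : 0 < c by rewrite /c subr_gt0.
have dp : 0 < d by rewrite /d subr_gt0.
have ep : 0 < c * B - b * A by rewrite subr_gt0.
have ts0 : 0 <= ts by apply: sqrtr_ge0.
have t2E : ts ^+ 2 = A * d / c.
  by rewrite sqr_sqrtr // divr_ge0 // ?mulr_ge0 // ltW.
have cn0 : c != 0 by rewrite gt_eqF.
have ABn0 : A - B != 0 by rewrite subr_eq0.
have AB2 : 0 < (A - B) ^+ 2 by rewrite lt_def sqrf_eq0 ABn0 sqr_ge0.
have prod : (ts - A) * (ts - B) < 0.
  have e1 : (ts - A) * (ts - B) * ((ts + A) * (ts + B)) =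
            - (a * A * (A - B) ^+ 2 * (c * B - b * A)) / c ^+ 2.
    have -> : (ts - A) * (ts - B) * ((ts + A) * (ts + B)) =
              (ts ^+ 2 - A ^+ 2) * (ts ^+ 2 - B ^+ 2) by ring.
    by rewrite t2E /d /c; field.
  have ap : 0 < a by lra.
  have pos : 0 < (a * A * (A - B) ^+ 2 * (c * B - b * A)) / c ^+ 2.
    exact: divr_gt0 (mulr_gt0 (mulr_gt0 (mulr_gt0 ap Ap) AB2) ep) (exprn_gt0 2 cp).
  have q : 0 < (ts + A) * (ts + B) by rewrite mulr_gt0 //; lra.
  rewrite ltNge; apply/negP => hge.
  have : 0 <= (ts - A) * (ts - B) * ((ts + A) * (ts + B)) by rewrite mulr_ge0 // ltW.
  rewrite e1; lra.
have [btw xs01] : Num.min A B < ts < Num.max A B /\ 0 < xs < 1.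
  have [lAB|lBA] := ltP A B.
    have bt : A < ts < B.
      by apply/andP; split; rewrite ltNge; apply/negP => H; nra.
    split; first exact: bt.
    by case/andP: bt => t1 t2; apply: frac01; nra.
  have lBA' : B < A by rewrite lt_def lBA nAB.
  have bt : B < ts < A.
    by apply/andP; split; rewrite ltNge; apply/negP => H; nra.
  split; first exact: bt.
  by case/andP: bt => t1 t2; apply: frac01; nra.
set V := (A * c + d - 2 * c * ts) / (A - B) ^+ 2.
have VE : ((Num.sqrt (A * (a - b)) - Num.sqrt (a * B - b * A)) / (A - B)) ^+ 2 = V.
  rewrite -/c -/d expr_div_n /V; congr (_ / _).
  have s1 : Num.sqrt (A * c) * Num.sqrt d = c * ts.
    rewrite -sqrtrM ?mulr_ge0 ?ltW //.
    rewrite -[c in RHS]ger0_norm ?ltW // -sqrtr_sqr -sqrtrM ?sqr_ge0 //.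
    by congr Num.sqrt; rewrite /c /d; field; exact: cn0.
  rewrite sqrrB s1 !sqr_sqrtr ?mulr_ge0 ?ltW //; ring.
rewrite VE.
have Tts x : 0 <= x < 1 -> T x - ts = (A - B) * (x - xs).
  by move=> _; rewrite /T /xs; field.
have key x : 0 <= x < 1 -> g x = V - c * (T x - ts) ^+ 2 / ((A - B) ^+ 2 * T x).
  move=> hx; have Tp := T_pos hx.
  have Tn0 : T x != 0 by rewrite gt_eqF.
  have z : c * ts ^+ 2 - A * d = 0 by rewrite t2E; field.
  have -> : g x = V - c * (T x - ts) ^+ 2 / ((A - B) ^+ 2 * T x)
                 + (c * ts ^+ 2 - A * d) / ((A - B) ^+ 2 * T x).
    move: Tn0; rewrite /g /V /G /T /c /d => Tn0; field.
    by rewrite Tn0 ABn0.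
  by rewrite z mul0r addr0.
have xs0 : 0 <= xs < 1 by case/andP: xs01 => /ltW -> ->.
have gxs : g xs = V by rewrite key // (Tts _ xs0) subrr mulr0 expr0n /= mulr0 mul0r subr0.
have Vp : 0 < V.
  rewrite -gxs /g divr_gt0 ?T_pos // mulr_gt0 ?G_pos // subr_gt0.
  by case/andP: xs01.
split => //; split => //; first by case/andP: xs01 => /ltW -> /ltW ->.
  by rewrite h_in.
apply: uniq_help => // x hx _ xn.
rewrite key //; have Tp := T_pos hx.
have : 0 < c * (T x - ts) ^+ 2 / ((A - B) ^+ 2 * T x).
  have sq : 0 < (T x - ts) ^+ 2.
    rewrite lt_def sqr_ge0 andbT sqrf_eq0 Tts //.
    by rewrite mulf_eq0 negb_or ABn0 subr_eq0.
  exact: divr_gt0 (mulr_gt0 cp sq) (mulr_gt0 AB2 Tp).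
lra.
Qed.

End Ana.


Unset Implicit Arguments.

Theorem theorem2 (R : rcfType) (m p : nat) (X : 'M[R]_(m, p))
    (nu w : 'I_m -> R) (i : 'I_m) :
  (2 <= p)%N -> (p < m)%N ->
  (forall l, 0 <= nu l) ->
  (forall l, 0 <= w l) -> \sum_l w l = 1 ->
  (forall l, w l < 1) ->
  0 < fdet X nu w ->
  let a := ca X nu w i in
  let b := cb X nu w i in
  let A := cA X nu w i in
  let B := cB X nu w i in
  let h := h_i X nu w i in
  let case1 := [/\ A != B, 0 < A, 0 < B, b < a & (b * A < a * B /\ b * A < (a - b) * B)] in
  let case2 := (A = B /\ 2 * b < a) in
  let case3 := [/\ A != B, B = 0 & b = 0] in
  [/\ case1 ->
        let ts := Num.sqrt (A * (a * B - b * A) / (a - b)) in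
        let xs := (ts - B) / (A - B) in
        [/\ Num.min A B < ts < Num.max A B, 0 < xs < 1 &
            unique_max_at h xs
              (((Num.sqrt (A * (a - b)) - Num.sqrt (a * B - b * A)) / (A - B)) ^+ 2)],
      case2 ->
        let xs := (a - 2 * b) / (2 * a - 2 * b) in
        [/\ 0 < a ^+ 2 / (4 * (a - b) * B), 0 < xs < 1 &
            unique_max_at h xs (a ^+ 2 / (4 * (a - b) * B))],
      case3 -> 0 < a / A /\ unique_max_at h 0 (a / A) &
      (~ case1 /\ ~ case2 /\ ~ case3) ->
        0 < b / B /\ unique_max_at h 0 (b / B)].
Proof.
move=> p2 pm nu0 w0 wsum w1 fpos a b A B h c1 c2 c3.
have wi1 := w1 i.
have p0 : (0 < p)%N by apply: ltn_trans p2.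
have p1' : (0 < p.-1)%N by rewrite -subn1 subn_gt0.
have bE : b = bY nu w i X by rewrite /b /cb /f_i; exact: (gen_b nu wi1 w0 X).
have aE : a = aY nu w i X by rewrite /a /ca /cb /f_i subn1; exact: (gen_a nu wi1 w0 X p0).
have bjE j : cbj X nu w i j = bY nu w i (colrem X j).
  by rewrite /cbj /fm_i /fminus; exact: (gen_b nu wi1 w0 (colrem X j)).
have ajE j : caj X nu w i j = aY nu w i (colrem X j).
  rewrite /caj /cbj /fm_i /fminus subn1 subn2.
  exact: (gen_a nu wi1 w0 (colrem X j) p1').
pose bj j := bY nu w i (colrem X j).
pose aj j := aY nu w i (colrem X j).
have AE : A = \sum_j aj j by rewrite /A /cA; apply: eq_bigr => j _; exact: ajE.
have BE : B = \sum_j bj j by rewrite /B /cB; apply: eq_bigr => j _; exact: bjE.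
have FE x : fdet X nu (wpath w i x) = (1 - x) ^+ p.-1 * (a * x + b * (1 - x)).
  by rewrite fdet_path aE bE fact_pow.
have FmE j x : fdet (colrem X j) nu (wpath w i x) =
    (1 - x) ^+ p.-2 * (aj j * x + bj j * (1 - x)).
  by rewrite fdet_path fact_pow.
have dge0 x : 0 <= x <= 1 -> forall l, 0 <= wpath w i x l * nu l.
  by move=> hx l; apply: mulr_ge0 (wpath_ge0 wi1 l w0 hx) (nu0 l).
have Fge0 x : 0 <= x <= 1 -> 0 <= fdet X nu (wpath w i x).
  by move=> hx; rewrite /fdet infoM_Gram; apply: Gram_det_ge0; exact: dge0.
have Fmge0 j x : 0 <= x <= 1 -> 0 <= fdet (colrem X j) nu (wpath w i x).
  by move=> hx; rewrite /fdet infoM_Gram; apply: Gram_det_ge0; exact: dge0.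
have [a0 b0] : 0 <= a /\ 0 <= b.
  apply: (@lim_ge0 _ p.-1) => x /andP [x0 x1]; rewrite -FE; apply: Fge0.
  by rewrite x0 ltW.
have ajb j : 0 <= aj j /\ 0 <= bj j.
  apply: (@lim_ge0 _ p.-2) => x /andP [x0 x1]; rewrite -FmE; apply: Fmge0.
  by rewrite x0 ltW.
have A0 : 0 <= A by rewrite AE sumr_ge0 // => j _; case: (ajb j).
have B0 : 0 <= B by rewrite BE sumr_ge0 // => j _; case: (ajb j).
have dn0 : \det (infoM X nu w) != 0 by rewrite gt_eqF.
have wge0 l : 0 <= w l * nu l by rewrite mulr_ge0.
have wi0 := w0 i.
have omw : 0 < 1 - w i by rewrite subr_gt0.
have Gwi : 0 < a * w i + b * (1 - w i).
  by move: fpos; rewrite (fdet_w nu wi1) FE pmulr_rgt0 // exprn_gt0.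
have Fmw j : 0 < aj j * w i + bj j * (1 - w i).
  have : 0 < fdet (colrem X j) nu w.
    by rewrite /fdet infoM_Gram; apply: Gram_colrem_pos.
  by rewrite (fdet_w nu wi1) FmE pmulr_rgt0 // exprn_gt0.
have Bpos : 0 < B.
  rewrite lt_def B0 andbT; apply/eqP => Be.
  apply: (B_contra wi1 w0 nu0 p0 dn0) => j.
  have := psumr_eq0P (P := predT) (fun j _ => (proj2 (ajb j))) (etrans (esym BE) Be).
  by move/(_ j isT).
have AaH : A = 0 -> a = 0.
  move=> Ae; rewrite aE; apply: (A_zero wi1 w0 nu0 p2).
    move=> j; have := Fmw j.
    have := psumr_eq0P (P := predT) (fun j _ => (proj1 (ajb j))) (etrans (esym AE) Ae).
    move/(_ j isT) => ->; rewrite mul0r add0r pmulr_lgt0 //.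
  move=> j.
  have := psumr_eq0P (P := predT) (fun j _ => (proj1 (ajb j))) (etrans (esym AE) Ae).
  by move/(_ j isT).
have hE x : 0 <= x <= 1 -> h x =
    if (x < 1) && (0 < a * x + b * (1 - x))
    then (1 - x) * (a * x + b * (1 - x)) / (A * x + B * (1 - x)) else 0.
  move=> hx; rewrite /h /h_i /hval.
  have trE : fdet X nu (wpath w i x) != 0 ->
      (\tr (invmx (infoM X nu (wpath w i x))))^-1 =
      fdet X nu (wpath w i x) / ((1 - x) ^+ p.-2 * (A * x + B * (1 - x))).
    move=> Fn0; rewrite tr_invmx // invfM invrK; congr (_ / _).
    have -> : \sum_j \det (row' j (col' j (infoM X nu (wpath w i x)))) =
              \sum_j fdet (colrem X j) nu (wpath w i x).
      by apply: eq_bigr => j _; rewrite rowcol_E /fdet !infoM_Gram Gram_colrem.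
    under eq_bigr do rewrite FmE.
    by rewrite -big_distrr /= big_split /= -!big_distrl /= -AE -BE.
  case/andP: hx => x0; rewrite le_eqVlt => /orP [/eqP x1|x1].
    rewrite x1 FE subrr expr0n /= -subn1 subn_eq0 leqNgt p2 /=.
    by rewrite mul0r ltxx ltxx.
  have omx : 0 < 1 - x by rewrite subr_gt0.
  have vp : 0 < (1 - x) ^+ p.-2 by rewrite exprn_gt0.
  rewrite x1 /= FE pmulr_rgt0 ?exprn_gt0 //.
  case: ifP => // Gp.
  rewrite trE; last by rewrite FE mulf_neq0 ?gt_eqF ?exprn_gt0.
  have Tp : 0 < A * x + B * (1 - x).
    have := mulr_ge0 A0 x0; have := mulr_gt0 Bpos omx; lra.
  have e : (1 - x) ^+ p.-1 = (1 - x) * (1 - x) ^+ p.-2 by rewrite -exprS prednK.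
  rewrite FE e; field.
  by rewrite !gt_eqF.
split.
- by move=> hc1; exact: (case1 a0 b0 A0 Bpos Gwi hE hc1).
- by move=> hc2; exact: (case2 a0 b0 Bpos Gwi hE hc2).
- by case=> _ Be _; move: Bpos; rewrite Be ltxx.
- by case=> n1 [n2 _]; exact: (case4 a0 b0 A0 Bpos AaH Gwi hE n1 n2).
Qed.
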